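(* A finite graph $G$ satisfies $\theta(G)=2$ if and only if $G$ is isomorphic to $K_2$ or to $\overline{K_2}$ (equivalently, $|V(G)|=2$).
   Context: All graphs are finite and simple. The distinguishing threshold $\theta(G)$ is the minimum $k$ such that every vertex coloring of $G$ using exactly $k$ colors is distinguishing (no non-identity automorphism maps every vertex to a vertex of the same color); equivalently $\theta(G)=1+\max\{c(\alpha):\alpha\in\mathrm{Aut}(G)\}$, where $c(\alpha)$ is the number of cycles of $\alpha$ as a permutation of $V(G)$ (fixed points count as cycles) and $c(\mathrm{id})=0$. *)

(* Defs.v *)
From mathcomp Require Import all_boot all_order all_fingroup.
Set Implicit Arguments. Unset Strict Implicit. Unset Printing Implicit Defensive.

(* A finite simple graph: vertex type T : finType, edge relation e : rel T,
   assumed symmetric and irreflexive (hypotheses in the theorem). *)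

Definition is_aut (T : finType) (e : rel T) (s : {perm T}) : bool :=
  [forall x, forall y, e (s x) (s y) == e x y].

Definition ncycles (T : finType) (s : {perm T}) : nat :=
  if s == 1%g then 0 else #|porbits s|.

Definition dist_threshold (T : finType) (e : rel T) : nat :=
  (\max_(s : {perm T} | is_aut e s) ncycles s).+1.

Definition graph_iso (T U : finType) (e : rel T) (f : rel U) : Prop :=
  exists g : T -> U, bijective g /\ forall x y, f (g x) (g y) = e x y.

Definition K2 : rel 'I_2 := fun i j => i != j.
Definition K2bar : rel 'I_2 := fun _ _ => false.

(* Main.v *)
Require Import Defs.
From mathcomp Require Import all_boot all_order all_fingroup.
From mathcomp Require Import zify.
Set Implicit Arguments. Unset Strict Implicit. Unset Printing Implicit Defensive.

Lemma cyc_fun (T : finType) (e : rel T) (e_sym : symmetric e) (f : T -> T)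
  (x0 : T) (n : nat) (Hu : uniq (traject f x0 n)) (Hn : iter n f x0 = x0)
  (Hall : forall y, y \in traject f x0 n) (H3 : 3 <= n)
  (Hf : forall u v, e (f u) (f v) = e u v) :
  exists r : T -> T, [/\ cancel r r, forall y z, e (r y) (r z) = e y z,
     r x0 = x0, r (f x0) != f x0 & f x0 != x0].
Proof.
pose t := traject f x0 n.
have Hsz : size t = n by rewrite size_traject.
have Hidx : forall k, k < n -> index (iter k f x0) t = k.
  move=> k kn; rewrite -(nth_traject f kn x0) index_uniq //.
  by rewrite size_traject.
have Hy : forall y, y = iter (index y t) f x0 /\ index y t < n.
  move=> y; have yt := Hall y.
  have Hi : index y t < n by rewrite -Hsz index_mem.
  split=> //.
  by rewrite -(nth_traject f Hi) nth_index.
have Hper : forall a, iter a f x0 = iter (a %% n) f x0.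
  move=> a; rewrite {1}(divn_eq a n) addnC iterD; congr (iter _ f _).
  elim: (a %/ n) => [|q IH]; first by rewrite mul0n.
  by rewrite mulSn iterD IH Hn.
have Hsh : forall c u v, e (iter c f u) (iter c f v) = e u v.
  by move=> c u v; elim: c => [|c IH] //=; rewrite Hf.
have Emod : forall a b a' b', a %% n = a' %% n -> b %% n = b' %% n ->
    e (iter a f x0) (iter b f x0) = e (iter a' f x0) (iter b' f x0).
  by move=> a b a' b' ha hb; rewrite Hper (Hper b) (Hper a') (Hper b') ha hb.
have Eshift : forall a b c, e (iter (a + c) f x0) (iter (b + c) f x0)
    = e (iter a f x0) (iter b f x0).
  by move=> a b c; rewrite !iterD -(Hsh c (iter a f x0)) -!iterD !(addnC c).
pose r y := iter ((n - index y t) %% n) f x0.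
have n0 : 0 < n by lia.
have I0 : index x0 t = 0 by apply: (Hidx 0).
have I1 : index (f x0) t = 1 by apply: (Hidx 1); lia.
exists r; split.
- move=> y; rewrite /r.
  have [Ey Hi] := Hy y.
  rewrite Hidx ?ltn_mod //.
  rewrite {2}Ey Hper; congr (iter _ f _).
  move: Hi; set k := index y t => Hi.
  case: k Hi => [|k] Hi.
    by rewrite subn0 modnn subn0 modnn mod0n.
  rewrite (modn_small (m := n - k.+1)); last by lia.
  by rewrite subKn ?(ltnW Hi) // modn_mod modn_small.
- move=> y z; rewrite /r.
  have [Ey Hi] := Hy y; have [Ez Hj] := Hy z.
  rewrite [in RHS]Ey [in RHS]Ez.
  move: Hi Hj; set i := index y t; set j := index z t => Hi Hj.
  rewrite -(Eshift _ _ (i + j)) e_sym.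
  apply: Emod.
  + rewrite modnDml; have -> : n - j + (i + j) = i + n by lia.
    by rewrite modnDr.
  + rewrite modnDml; have -> : n - i + (i + j) = j + n by lia.
    by rewrite modnDr.
- rewrite /r.
  by rewrite I0 subn0 modnn.
- rewrite /r I1 modn_small; last by lia.
  apply/eqP => /(congr1 (fun y => index y t)) /=.
  rewrite I1 Hidx; lia.
- apply/eqP => /(congr1 (fun y => index y t)) /=.
  rewrite I1 I0 //.
Qed.


Lemma card2_elems (T : finType) : #|T| = 2 ->
  exists x y : T, x != y /\ forall z, z = x \/ z = y.
Proof.
move=> H; have : #|[set: T]| == 2 by rewrite cardsT H.
case/cards2P => x [y [xy Hs]]; exists x, y; split=> // z.
have : z \in [set: T] by rewrite inE.
by rewrite Hs !inE => /orP [/eqP->|/eqP->]; [left|right].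
Qed.

Lemma two_el (T : finType) (x y : T) : (forall z, z = x \/ z = y) ->
  forall a b c : T, a != b -> c != a -> c = b.
Proof.
move=> H a b c ab ca.
by case: (H a) ab ca => ->; case: (H b) => ->; case: (H c) => ->;
  rewrite ?eqxx.
Qed.

Lemma card2_iso (T : finType) (e : rel T) (e_sym : symmetric e)
  (e_irr : irreflexive e) : #|T| = 2 -> graph_iso e K2 \/ graph_iso e K2bar.
Proof.
case/card2_elems => x [y [xy Hxy]].
pose g z : 'I_2 := if z == x then ord0 else ord_max.
pose h (i : 'I_2) := if i == ord0 then x else y.
have bg : bijective g.
  exists h.
    move=> z; rewrite /g /h; case: (eqVneq z x) => [->|hz] //=.
    by case: (Hxy z) hz => ->; rewrite ?eqxx.
  move=> i; rewrite /g /h; case: i => [[|[|i]] Hi] //=.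
    by rewrite eqxx; apply: val_inj.
  by rewrite eq_sym (negbTE xy); apply: val_inj.
have gx : g x = ord0 by rewrite /g eqxx.
have gy : g y = ord_max by rewrite /g eq_sym (negbTE xy).
case: (boolP (e x y)) => H; [left|right]; exists g; split=> // a b;
  case: (Hxy a) => ->; case: (Hxy b) => ->;
  rewrite ?gx ?gy /K2 /K2bar ?e_irr //= -?(e_sym x y) ?(negbTE H) ?H //.
Qed.

Lemma card2_thr (T : finType) (e : rel T) (e_sym : symmetric e)
  (e_irr : irreflexive e) : #|T| = 2 -> dist_threshold e = 2.
Proof.
case/card2_elems => x [y [xy Hxy]].
have T2 := two_el Hxy.
have Hone : forall p : {perm T}, p != 1%g -> forall z, p z != z.
  move=> p Hp z; apply/eqP=> Hz; apply: (negP Hp); apply/eqP/permP => u.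
  rewrite perm1; case: (eqVneq u z) => [->|uz] //.
  apply: (T2 z u (p u)); first by rewrite eq_sym.
  by rewrite -{1}Hz (inj_eq (@perm_inj _ p)).
have Hset : forall p : {perm T}, p != 1%g -> forall z, porbit p z = [set: T].
  move=> p Hp z; apply/setP => u; rewrite inE.
  case: (eqVneq u z) => [->|uz]; first exact: porbit_id.
  rewrite (T2 z (p z) u) ?(eq_sym z) ?Hone //.
  by rewrite -{1}(expg1 p) mem_porbit.
rewrite /dist_threshold; congr S; apply/eqP; rewrite eqn_leq; apply/andP; split.
  apply/bigmax_leqP => p _; rewrite /ncycles; case: eqP => // /eqP Hp.
  rewrite -(cards1 [set: T]); apply: subset_leq_card.
  by apply/subsetP => P /imsetP [z _ ->]; rewrite inE Hset.
have sw1 : tperm x y != 1%g.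
  apply/eqP => H; have := congr1 (fun p : {perm T} => p x) H.
  by rewrite tpermL perm1 => /eqP; rewrite eq_sym (negbTE xy).
apply: (bigmax_sup (tperm x y)).
  apply/forallP => a; apply/forallP => b.
  by case: (Hxy a) => ->; case: (Hxy b) => ->;
    rewrite ?tpermL ?tpermR ?e_irr // e_sym.
rewrite /ncycles (negbTE sw1) card_gt0; apply/set0Pn.
by exists (porbit (tperm x y) x); apply: imset_f.
Qed.

Lemma thr_card2 (T : finType) (e : rel T) (e_sym : symmetric e)
  (e_irr : irreflexive e) : dist_threshold e = 2 -> #|T| = 2.
Proof.
rewrite /dist_threshold => -[Hmax].
have Hle : forall s, is_aut e s -> ncycles s <= 1.
  by move=> s Hs; rewrite -Hmax; apply: leq_bigmax_cond.
case: (pickP (fun s => is_aut e s && (ncycles s == 1))) => [s /andP [As /eqP Cs]|Hn]; last first.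
  suff : \max_(s | is_aut e s) ncycles s <= 0 by rewrite Hmax.
  apply/bigmax_leqP => s As; have := Hn s; rewrite /= As /= => /negbT.
  by have := Hle s As; case: (ncycles s) => [|[|]].
move: Cs; rewrite /ncycles; case: eqP => // /eqP s1 Cs.
have [x0 Px0] : exists x0, porbit s x0 \in porbits s.
  have : 0 < #|porbits s| by rewrite Cs.
  by rewrite card_gt0 => /set0Pn [_ /imsetP [x0 _ _]]; exists x0; apply: imset_f.
have Hall : forall y, y \in porbit s x0.
  move=> y; move: Cs => /eqP /cards1P [Q HQ].
  have Py : porbit s y \in porbits s by apply: imset_f.
  move: Px0 Py; rewrite HQ !inE => /eqP -> /eqP <-; exact: porbit_id.
have Hf : forall u v, e (s u) (s v) = e u v.
  by move=> u v; move/forallP: As => /(_ u) /forallP /(_ v) /eqP.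
have HallT : forall y, y \in traject s x0 #|porbit s x0|.
  by move=> y; rewrite -porbit_traject.
have Hcard : #|porbit s x0| = #|T|.
  by rewrite -cardsT; apply: eq_card => y; rewrite inE Hall.
rewrite -Hcard.
case: (ltnP 2 #|porbit s x0|) => H3.
  have [r [rr re rx0 rs sx0]] := cyc_fun e_sym (uniq_traject_porbit s x0)
     (iter_porbit s x0) HallT H3 Hf.
  pose rp := perm (can_inj rr).
  have Ar : is_aut e rp.
    by apply/forallP => u; apply/forallP => v; rewrite !permE re.
  have r1 : rp != 1%g.
    apply/eqP => H; have := congr1 (fun p : {perm T} => p (s x0)) H.
    by rewrite permE perm1 => /eqP; rewrite (negbTE rs).
  have rpx : forall i, (rp ^+ i)%g x0 = x0.
    by elim=> [|i IH]; rewrite ?expg0 ?perm1 // expgSr permM IH permE.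
  have neq : porbit rp x0 != porbit rp (s x0).
    apply/eqP => H; have : s x0 \in porbit rp x0 by rewrite H porbit_id.
    by case/porbitP => i; rewrite rpx => /eqP; rewrite (negbTE sx0).
  have := Hle rp Ar; rewrite /ncycles (negbTE r1).
  have : 2 <= #|porbits rp|.
    have <- : #|[set porbit rp x0; porbit rp (s x0)]| = 2 by rewrite cards2 neq.
    apply: subset_leq_card.
    by apply/subsetP => P; rewrite !inE => /orP [] /eqP ->; apply: imset_f.
  by case: #|porbits rp| => [|[|]].
move: H3; case Hn: #|porbit s x0| => [|[|[|]]] // _.
- by move: (card_porbit_neq0 s x0); rewrite Hn.
- exfalso; apply: (negP s1); apply/eqP/permP => y; rewrite perm1.
  have := HallT y; rewrite Hn /= inE => /eqP ->.
  by have := iter_porbit s x0; rewrite Hn.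
Qed.

Theorem mainTheorem4 (T : finType) (e : rel T)
  (e_sym : symmetric e) (e_irr : irreflexive e) :
  dist_threshold e = 2 <-> (graph_iso e K2 \/ graph_iso e K2bar).
Proof.
split; first by move/(thr_card2 e_sym e_irr)/(card2_iso e_sym e_irr).
by case=> -[g [bg _]]; apply: (card2_thr e_sym e_irr);
  rewrite (bij_eq_card bg) card_ord.
Qed.
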